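(* For sufficiently large $n$, $$R(\mathcal{J},Q_n)\le R(\mathcal{SD}_{1,2},Q_n)\le n+\frac{(2+o(1))\,n}{\log n}.$$
   Context: A copy of a poset $P$ in a poset $P_1$ is an induced subposet of $P_1$ isomorphic to $P$. $Q_n$ is the Boolean lattice of all subsets of an $n$-element set ordered by inclusion. $R(P_1,P_2)$ is the smallest $N$ such that every blue/red coloring of the elements of $Q_N$ contains an all-blue copy of $P_1$ or an all-red copy of $P_2$. The poset $\mathcal{J}$ has four distinct elements $A,B,C,D$ with $B\le C\le D$, $B\le A$, $A$ incomparable to $C$, and $A$ incomparable to $D$ (and no other relations besides those implied). $\mathcal{SD}_{s,t}$ is the poset obtained from two disjoint, mutually element-wise incomparable chains of lengths $s$ and $t$ by adding a common minimum element and a common maximum element. $\log$ is base $2$; $o(1)\to0$ as $n\to\infty$. *)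

(* Defs.v *)
From mathcomp Require Import all_boot.
From Stdlib Require Import Reals.

Set Implicit Arguments.
Unset Strict Implicit.
Unset Printing Implicit Defensive.

Definition QN (N : nat) := {set 'I_N}.

Definition is_copy (T : finType) (le : rel T) (N : nat) (f : T -> {set 'I_N}) : Prop :=
  injective f /\ forall x y : T, le x y = (f x \subset f y).

(* Coloring of Q_N: c A = true means A is blue, false means red.
   ramsey_prop P1 P2 N: every blue/red coloring of Q_N contains an all-blue
   copy of P1 or an all-red copy of P2. *)
Definition ramsey_prop (T1 : finType) (le1 : rel T1) (T2 : finType) (le2 : rel T2)
    (N : nat) : Prop :=
  forall c : {set 'I_N} -> bool,
    (exists f : T1 -> {set 'I_N}, is_copy le1 f /\ forall x, c (f x) = true) \/
    (exists g : T2 -> {set 'I_N}, is_copy le2 g /\ forall x, c (g x) = false).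

Definition is_ramsey_number (T1 : finType) (le1 : rel T1) (T2 : finType) (le2 : rel T2)
    (r : nat) : Prop :=
  ramsey_prop le1 le2 r /\ forall M, M < r -> ~ ramsey_prop le1 le2 M.

Definition Qle (n : nat) : rel {set 'I_n} := fun A B => A \subset B.

(* The poset J on 'I_4 with A = 0, B = 1, C = 2, D = 3:
   B <= C <= D, B <= A (reflexive-transitive closure). *)
Definition Jle : rel 'I_4 := fun x y =>
  [|| x == y,
      (val x == 1) && (val y == 2),
      (val x == 2) && (val y == 3),
      (val x == 1) && (val y == 3)
    | (val x == 1) && (val y == 0)].

(* The subdivided diamond SD_{s,t} on 'I_(s+t+2): 0 is the minimum,
   s+t+1 is the maximum, 1..s form the first chain (s elements), s+1..s+t form
   the second chain (t elements); elements of distinct chains are incomparable. *)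
Definition SDle (s t : nat) : rel 'I_(s + t + 2) := fun x y =>
  [|| val x == 0, val y == s + t + 1
    | (val x <= val y) && ((val y <= s) || (s < val x))].

(* Main.v *)
Require Import Defs.
From mathcomp Require Import all_boot.
From Stdlib Require Import Reals.
From mathcomp Require Import fingroup perm zify.
From Stdlib Require Import Lra ZArith ClassicalEpsilon Classical.

Set Implicit Arguments.
Unset Strict Implicit.
Unset Printing Implicit Defensive.

Definition asb (P : Prop) : bool := if excluded_middle_informative P then true else false.
Lemma asbP (P : Prop) : reflect P (asb P).
Proof. rewrite /asb; case: excluded_middle_informative => h; by constructor. Qed.


Lemma sd_copy (N : nat) (c : {set 'I_N} -> bool) (A C D E B : {set 'I_N}) :
  A \subset C -> A \subset D -> D \subset E -> E \subset B -> C \subset B ->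
  ~~ (C \subset A) -> ~~ (D \subset A) -> ~~ (B \subset C) -> ~~ (B \subset E) ->
  ~~ (E \subset D) -> ~~ (C \subset E) -> ~~ (D \subset C) ->
  c A -> c C -> c D -> c E -> c B ->
  exists f : 'I_(1 + 2 + 2) -> {set 'I_N}, is_copy (@SDle 1 2) f /\ forall x, c (f x) = true.
Proof.
move=> AC AD DE EB CB CA DA BC BE ED CE DC cA cC cD cE cB.
have AE := subset_trans AD DE; have AB := subset_trans AE EB.
have DB := subset_trans DE EB.
have EA : ~~ (E \subset A) by apply: contra DA => h; apply: subset_trans DE h.
have BA : ~~ (B \subset A) by apply: contra CA => h; apply: subset_trans CB h.
have BD : ~~ (B \subset D) by apply: contra BE => h; apply: subset_trans h DE.
have CD : ~~ (C \subset D) by apply: contra CE => h; apply: subset_trans h DE.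
have EC : ~~ (E \subset C) by apply: contra DC => h; apply: subset_trans DE h.
pose f (x : 'I_(1 + 2 + 2)) := nth B [:: A; C; D; E] (val x).
have ord : forall x y, SDle x y = (f x \subset f y).
  move=> x y; case: x => [[|[|[|[|[|x]]]]] hx] //=;
  case: y => [[|[|[|[|[|y]]]]] hy] //=;
  rewrite /SDle /f /= ?subxx ?AC ?AD ?DE ?EB ?CB ?AE ?AB ?DB
    ?(negbTE CA) ?(negbTE DA) ?(negbTE BC) ?(negbTE BE) ?(negbTE ED)
    ?(negbTE CE) ?(negbTE DC) ?(negbTE EA) ?(negbTE BA) ?(negbTE BD)
    ?(negbTE CD) ?(negbTE EC) //.
exists f; split; last first.
  by move=> [[|[|[|[|[|x]]]]] hx] //=.
split=> // x y e.
have h1 := ord x y; have h2 := ord y x; rewrite e subxx in h1 h2.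
move: x y h1 h2 {e}.
by move=> [[|[|[|[|[|x]]]]] hx] [[|[|[|[|[|y]]]]] hy] //= h1 h2; apply/val_inj.
Qed.

Section Comb.
Variables (n K : nat).
Local Notation U := 'I_(n + K).

Definition emb (S : {set 'I_n}) : {set U} := lshift K @: S.
Definition Ys (w : nat -> U) (l : nat) : {set U} :=
  [set u | has (fun q => w q == u) (iota 0 l)].

Lemma emb_lt S u : u \in emb S -> val u < n.
Proof. by case/imsetP=> i _ ->; rewrite /= ltn_ord. Qed.

Lemma mem_emb S i : (lshift K i \in emb S) = (i \in S).
Proof. by rewrite mem_imset //; apply: lshift_inj. Qed.

Lemma YsP w l u : reflect (exists2 q, q < l & w q = u) (u \in Ys w l).
Proof.
rewrite inE; apply: (iffP hasP) => [[q]|[q]].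
  by rewrite mem_iota add0n => /andP[_ ql] /eqP <-; exists q.
by move=> ql <-; exists q; rewrite ?mem_iota ?add0n ?ql.
Qed.

Lemma Ys_mono w l l' : l <= l' -> Ys w l \subset Ys w l'.
Proof.
move=> ll'; apply/subsetP => u /YsP[q ql <-]; apply/YsP; exists q => //.
exact: leq_trans ql ll'.
Qed.

Lemma Ys0 w : Ys w 0 = set0.
Proof. by apply/setP => u; rewrite inE. Qed.

Definition Zc w (s : nat -> {set 'I_n}) l := emb (s l) :|: Ys w l.

Definition bchain (c : {set U} -> bool) w (s : nat -> {set 'I_n}) i :=
  (forall l, l < i -> s l \subset s l.+1) /\ (forall l, l <= i -> c (Zc w s l)).

Definition Bp c w (S : {set 'I_n}) i := exists s, bchain c w s i /\ s i \subset S.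

Lemma Bp_mono c w (S S' : {set 'I_n}) i : S \subset S' -> Bp c w S i -> Bp c w S' i.
Proof. by move=> SS' [s [ch si]]; exists s; split=> //; apply: subset_trans SS'. Qed.

Lemma Bp_down c w (S : {set 'I_n}) i j : j <= i -> Bp c w S i -> Bp c w S j.
Proof.
move=> ji [s [[ch1 ch2] si]]; exists s; split; first split.
- by move=> l lj; apply: ch1; apply: leq_trans lj ji.
- by move=> l lj; apply: ch2; apply: leq_trans lj ji.
elim: i ji si {ch2} ch1 => [|i IH]; first by rewrite leqn0 => /eqP ->.
rewrite leq_eqVlt => /orP[/eqP -> //|ji] si ch1.
apply: IH => //; first by apply: subset_trans (ch1 i (ltnSn i)) si.
by move=> l li; apply: ch1; apply: ltnW.
Qed.

Lemma chain_lemma (c : {set U} -> bool) (w : nat -> U) (Kc : nat) :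
  (forall q, n <= val (w q)) ->
  (exists g, is_copy (@Qle n) g /\ forall x, c (g x) = false) \/
  (exists s, bchain c w s Kc).
Proof.
move=> wY.
case: (classic (exists S, Bp c w S Kc)) => [[S [s [ch _]]]|noB]; first by right; exists s.
left.
have exP : forall S, exists i, ~~ asb (Bp c w S i).
  by move=> S; exists Kc; apply/asbP => h; apply: noB; exists S.
pose t S := ex_minn (exP S).
have tP : forall S, ~ Bp c w S (t S).
  by move=> S; rewrite /t; case: ex_minnP => i /asbP.
have tmin : forall S i, ~ Bp c w S i -> t S <= i.
  by move=> S i h; rewrite /t; case: ex_minnP => j _; apply; apply/asbP.
have tmono : forall S S' : {set 'I_n}, S \subset S' -> t S <= t S'.
  by move=> S S' SS'; apply: tmin => h; apply: (tP S'); apply: Bp_mono h.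
have tred : forall S, c (Zc w (fun _ => S) (t S)) = false.
  move=> S; apply/negP => cb; apply: (tP S).
  case E: (t S) => [|i].
    exists (fun _ => S); split=> //; split=> // l; rewrite leqn0 => /eqP ->.
    by rewrite -E.
  have [[s [[ch1 ch2] si]]|h] := classic (Bp c w S i); last first.
    by have := tmin _ _ h; rewrite E ltnn.
  exists (fun l => if l == i.+1 then S else s l); split; last by rewrite eqxx.
  split.
  - move=> l; rewrite ltnS leq_eqVlt => /orP[/eqP ->|li].
      by rewrite eqxx (ltn_eqF (ltnSn i)).
    have -> : (l == i.+1) = false by apply/eqP; lia.
    have -> : (l.+1 == i.+1) = false by apply/eqP; lia.
    exact: ch1.
  - move=> l; rewrite leq_eqVlt => /orP[/eqP ->|li]; first by rewrite /Zc eqxx -E.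
    rewrite /Zc; have -> : (l == i.+1) = false by apply/eqP; lia.
    by apply: ch2; rewrite -ltnS.
pose g S := Zc w (fun _ => S) (t S).
have gsub : forall S S' : {set 'I_n}, g S \subset g S' -> S \subset S'.
  move=> S S' h; apply/subsetP => x xS.
  have : lshift K x \in g S by rewrite /g /Zc inE mem_emb xS.
  move/(subsetP h); rewrite /g /Zc inE mem_emb => /orP[//|/YsP[q _ e]].
  by have := wY q; rewrite e /= leqNgt ltn_ord.
have gmono : forall S S' : {set 'I_n}, S \subset S' -> g S \subset g S'.
  move=> S S' h; apply: setUSS; first exact: imsetS.
  exact: Ys_mono (tmono _ _ h).
exists g; split=> //; split.
  move=> S S' e; apply/eqP; rewrite eqEsubset; apply/andP; split; apply: gsub; by rewrite e.
by move=> S S'; rewrite /Qle; apply/idP/idP; [apply: gmono | apply: gsub].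
Qed.

Lemma bchain_mono c w s Kc p q : bchain c w s Kc -> p <= q -> q <= Kc -> s p \subset s q.
Proof.
move=> [ch _] pq; elim: q pq => [|q IH]; first by rewrite leqn0 => /eqP ->.
rewrite leq_eqVlt => /orP[/eqP -> //|pq] qK.
apply: subset_trans (IH pq (ltnW qK)) (ch q qK).
Qed.

Lemma Zc_sub c w s Kc p q :
  (forall q, n <= val (w q)) ->
  (forall q q', q < Kc -> q' < Kc -> w q = w q' -> q = q') ->
  bchain c w s Kc -> p <= Kc -> q <= Kc ->
  (Zc w s p \subset Zc w s q) = (p <= q).
Proof.
move=> wY winj ch pK qK; apply/idP/idP => [h|pq].
  rewrite leqNgt; apply/negP => qp.
  have : w q \in Zc w s p by rewrite inE; apply/orP; right; apply/YsP; exists q.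
  move/(subsetP h); rewrite inE => /orP[/emb_lt|/YsP[r rq e]].
    by rewrite ltnNge wY.
  have := winj r q ltac:(lia) ltac:(lia) e.
  by move=> er; rewrite er ltnn in rq.
apply: setUSS; first by apply: imsetS; apply: bchain_mono ch pq qK.
exact: Ys_mono.
Qed.


Lemma two_chains c w w' s s' Kc :
  (forall q, n <= val (w q)) -> (forall q, n <= val (w' q)) ->
  (forall q q', q < Kc -> q' < Kc -> w q = w q' -> q = q') ->
  (forall q q', q < Kc -> q' < Kc -> w' q = w' q' -> q = q') ->
  Ys w Kc = Ys w' Kc ->
  (forall q p, q < Kc -> p < Kc -> w q = w' p -> odd q = odd p) ->
  (exists q, (q < Kc) && (w q != w' q)) ->
  bchain c w s Kc -> bchain c w' s' Kc -> s 0 = s' 0 -> s Kc = s' Kc ->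
  exists f : 'I_(1 + 2 + 2) -> {set U}, is_copy (@SDle 1 2) f /\ forall x, c (f x) = true.
Proof.
move=> wY w'Y winj w'inj Yeq par dq ch ch' e0 eK.
case: (ex_minnP dq) => l /andP[lK wl] lmin.
have eqb : forall q, q < l -> w q = w' q.
  move=> q ql; apply/eqP; apply/negPn/negP => h.
  have := lmin q; rewrite h andbT (ltn_trans ql lK) => /(_ isT).
  by rewrite leqNgt ql.
have : w l \in Ys w' Kc by rewrite -Yeq; apply/YsP; exists l.
case/YsP=> p pK ep.
have lp : l < p.
  rewrite ltnNge leq_eqVlt; apply/negP => /orP[/eqP pl|pl].
    by move: wl; rewrite -ep pl eqxx.
  have := winj p l (ltn_trans pl lK) lK; rewrite eqb // ep => /(_ erefl) pl'.
  by rewrite pl' ltnn in pl.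
have op := par l p lK pK (esym ep).
have l2p : l.+2 <= p.
  rewrite ltn_neqAle lp andbT; apply/eqP => el; rewrite -el /= in op.
  by move: op; case: (odd l).
have l2K : l.+2 < Kc by lia.
pose A := Zc w s 0; pose C := Zc w s l.+1; pose D := Zc w' s' l.+1;
pose E := Zc w' s' l.+2; pose B := Zc w s Kc.
have eA : A = Zc w' s' 0 by rewrite /A /Zc !Ys0 e0.
have eB : B = Zc w' s' Kc by rewrite /B /Zc Yeq eK.
have sub1 := Zc_sub wY winj ch. have sub2 := Zc_sub w'Y w'inj ch'.
have yC : w l \in C by rewrite inE; apply/orP; right; apply/YsP; exists l.
have yE : w l \notin E.
  rewrite inE negb_or; apply/andP; split.
    by apply/negP => /emb_lt; rewrite ltnNge wY.
  apply/negP => /YsP[r rl er].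
  have := w'inj r p ltac:(lia) pK; rewrite er ep => /(_ erefl) rp.
  by move: rl; rewrite rp ltnNge l2p.
have zD : w' l \in D by rewrite inE; apply/orP; right; apply/YsP; exists l.
have zC : w' l \notin C.
  rewrite inE negb_or; apply/andP; split.
    by apply/negP => /emb_lt; rewrite ltnNge w'Y.
  apply/negP => /YsP[r rl er].
  move: rl; rewrite ltnS leq_eqVlt => /orP[/eqP rl|rl].
    by move: wl; rewrite -er rl eqxx.
  have := w'inj r l ltac:(lia) lK; rewrite -er eqb // => /(_ erefl) rl'.
  by rewrite rl' ltnn in rl.
have DE : D \subset E by rewrite sub2 ?ltnS ?leqnSn //; lia.
apply: (@sd_copy _ c A C D E B).
- by rewrite sub1 //; lia.
- by rewrite eA sub2 //; lia.
- exact: DE.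
- by rewrite eB sub2 //; lia.
- by rewrite sub1 //; lia.
- by rewrite sub1 //; lia.
- by rewrite eA sub2 //; lia.
- by rewrite sub1 //; lia.
- by rewrite eB sub2 //; lia.
- by rewrite sub2 //; lia.
- by apply/negP => /subsetP /(_ _ yC); apply/negP.
- by apply/negP => /subsetP /(_ _ zD); apply/negP.
- by case: ch => _; apply.
- by case: ch => _; apply; lia.
- by case: ch' => _; apply; lia.
- by case: ch' => _; apply; lia.
- by case: ch => _; apply.
Qed.

End Comb.

Lemma card_setI n : #|{set 'I_n}| = expn 2 n.
Proof.
have -> : expn 2 n = #|powerset [set: 'I_n]| by rewrite card_powerset cardsT card_ord.
by apply: eq_card => A; rewrite powersetE subsetT.
Qed.

Section Params.
Variables (n m' : nat).
Local Notation m := m'.+1.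
Local Notation U := 'I_(n + (m + m)).

Definition ya (j : 'I_m) : U := rshift n (lshift m j).
Definition yb (j : 'I_m) : U := rshift n (rshift m j).
Definition wf (a b : {perm 'I_m}) (q : nat) : U :=
  if odd q then yb (b (inord q./2)) else ya (a (inord q./2)).

Lemma wf_val a b q :
  val (wf a b q) = if odd q then n + (m + b (inord q./2)) else n + a (inord q./2).
Proof. by rewrite /wf; case: (odd q). Qed.

Lemma wfY a b q : n <= val (wf a b q).
Proof. by rewrite wf_val; case: (odd q); rewrite leq_addr. Qed.

Lemma wf_odd a b a' b' q p : wf a b q = wf a' b' p -> odd q = odd p.
Proof.
move/(congr1 val); rewrite !wf_val.
case: (odd q); case: (odd p) => // e.
- have := ltn_ord (a' (inord p./2)); lia.
- have := ltn_ord (a (inord q./2)); lia.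
Qed.

Lemma wf_inj a b q q' : q < m + m -> q' < m + m -> wf a b q = wf a b q' -> q = q'.
Proof.
move=> qK q'K e; have op := wf_odd e.
move: e => /(congr1 val); rewrite !wf_val -op.
have h2 : q./2 < m by lia.
have h2' : q'./2 < m by lia.
have fin : q./2 = q'./2 -> q = q'.
  by move=> eh; rewrite -(odd_double_half q) -(odd_double_half q') op eh.
case: (odd q) => e; apply: fin.
- have : b (inord q./2) = b (inord q'./2) by apply: val_inj => /=; lia.
  by move/perm_inj/(congr1 val); rewrite /= !inordK.
- have : a (inord q./2) = a (inord q'./2) by apply: val_inj => /=; lia.
  by move/perm_inj/(congr1 val); rewrite /= !inordK.
Qed.

Lemma wf_Ys a b : Ys (wf a b) (m + m) = [set u : U | n <= val u].
Proof.
apply/setP => u; apply/idP/idP.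
  by case/YsP=> q _ <-; rewrite inE wfY.
rewrite inE => nu; apply/YsP.
have uK := ltn_ord u.
case: (ltnP (val u) (n + m)) => um; move: nu um => /= nu um.
  pose j : 'I_m := inord (val u - n).
  exists ((a^-1)%g j).*2; first by have := ltn_ord ((a^-1)%g j); lia.
  apply: val_inj; rewrite wf_val odd_double doubleK inord_val permKV /j inordK /=; lia.
pose j : 'I_m := inord (val u - n - m).
exists ((b^-1)%g j).*2.+1; first by have := ltn_ord ((b^-1)%g j); lia.
apply: val_inj; rewrite wf_val /= odd_double /= uphalf_double inord_val permKV /j inordK /=; lia.
Qed.

Lemma wf_diff a b a' b' : (a, b) <> (a', b') ->
  exists q, (q < m + m) && (wf a b q != wf a' b' q).
Proof.
move=> ne.
case: (classic (forall j, a j = a' j)) => ha.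
  have {}ha : a = a' by apply/permP.
  case: (classic (forall j, b j = b' j)) => hb.
    by exfalso; apply: ne; rewrite ha (_ : b = b') //; apply/permP.
  case: (not_all_ex_not _ _ hb) => j hj {hb}.
  exists j.*2.+1; apply/andP; split; first by have := ltn_ord j; lia.
  apply/eqP => /(congr1 val); rewrite !wf_val /= odd_double /= uphalf_double inord_val.
  move=> e; apply: hj; apply: val_inj => /=; move: e => /=; lia.
case: (not_all_ex_not _ _ ha) => j hj {ha}.
exists j.*2; apply/andP; split; first by have := ltn_ord j; lia.
apply/eqP => /(congr1 val); rewrite !wf_val /= odd_double /= doubleK inord_val.
move=> e; apply: hj; apply: val_inj => /=; move: e => /=; lia.
Qed.
End Params.

Lemma ramsey_SD n m' : expn 2 n * expn 2 n < m'.+1`! * m'.+1`! ->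
  ramsey_prop (@SDle 1 2) (@Qle n) (n + (m'.+1 + m'.+1)).
Proof.
move=> big c.
case: (classic (exists g, is_copy (@Qle n) g /\ forall x, c (g x) = false)) => [h|nored].
  by right.
left.
have H : forall pr : {perm 'I_m'.+1} * {perm 'I_m'.+1},
    exists s, bchain c (wf n pr.1 pr.2) s (m'.+1 + m'.+1).
  move=> pr; case: (@chain_lemma n (m'.+1 + m'.+1) c (wf n pr.1 pr.2) (m'.+1 + m'.+1) (@wfY n m' pr.1 pr.2)) => //.
pose S pr := proj1_sig (constructive_indefinite_description _ (H pr)).
have HS : forall pr, bchain c (wf n pr.1 pr.2) (S pr) (m'.+1 + m'.+1).
  by move=> pr; rewrite /S; case: constructive_indefinite_description.
pose phi pr := (S pr 0, S pr (m'.+1 + m'.+1)).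
have [pr [pr' [e ne]]] : exists pr pr', phi pr = phi pr' /\ pr <> pr'.
  apply: NNPP => h.
  have inj : injective phi.
    move=> x y e; apply: NNPP => ne; apply: h; by exists x, y.
  have := leq_card phi inj; rewrite !card_prod card_Sn !card_setI => le.
  by move: big; rewrite ltnNge le.
case: pr pr' e ne => a b [a' b'] /= [e0 eK] ne.
have := wf_diff n ne.
move=> dq.
apply: (@two_chains _ _ c (wf n a b) (wf n a' b') (S (a, b)) (S (a', b')) (m'.+1 + m'.+1)).
- exact: wfY.
- exact: wfY.
- exact: wf_inj.
- exact: wf_inj.
- by rewrite !wf_Ys.
- by move=> q p _ _; apply: wf_odd.
- exact: dq.
- exact: (HS (a, b)).
- exact: (HS (a', b')).
- exact: e0.
- exact: eK.
Qed.

Definition phiJ (x : 'I_4) : 'I_(1 + 2 + 2) := insubd ord0 (nth 0 [:: 1; 0; 2; 3] x).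

Lemma phiJ_val z : val (phiJ z) = nth 0 [:: 1; 0; 2; 3] z.
Proof. by rewrite /phiJ insubdK //; case: z => [[|[|[|[|z]]]] hz]. Qed.

Lemma phiJ_le x y : Jle x y = SDle (phiJ x) (phiJ y).
Proof.
rewrite /SDle !phiJ_val.
by case: x => [[|[|[|[|x]]]] hx] //; case: y => [[|[|[|[|y]]]] hy] //.
Qed.

Lemma phiJ_inj : injective phiJ.
Proof.
move=> x y /(congr1 val); rewrite !phiJ_val => e; apply: val_inj.
by case: x e => [[|[|[|[|x]]]] hx] //; case: y => [[|[|[|[|y]]]] hy].
Qed.


Lemma ramsey_J' n N : ramsey_prop (@SDle 1 2) (@Qle n) N -> ramsey_prop Jle (@Qle n) N.
Proof.
move=> h c; case: (h c) => [[f [[finj ford] fc]]|r]; last by right.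
left; exists (fun x => f (phiJ x)); split=> //; split.
  by move=> x y /finj /phiJ_inj.
by move=> x y; rewrite phiJ_le ford.
Qed.

Lemma ramsey_num_exists (T1 : finType) (le1 : rel T1) (T2 : finType) (le2 : rel T2) N :
  ramsey_prop le1 le2 N -> exists r, is_ramsey_number le1 le2 r /\ r <= N.
Proof.
move=> h.
have ex : exists k, asb (ramsey_prop le1 le2 k) by exists N; apply/asbP.
case: (ex_minnP ex) => r /asbP hr rmin.
exists r; split; last by apply: rmin; apply/asbP.
split=> // M Mr hM; have := rmin M (introT (asbP _) hM); by rewrite leqNgt Mr.
Qed.

Section RealPart.
Local Unset Implicit Arguments.
Local Open Scope R_scope.

Lemma ln_le' a b : 0 < a -> a <= b -> ln a <= ln b.
Proof.
move=> a0 ab; case: (Rle_lt_or_eq_dec _ _ ab) => h.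
  by apply: Rlt_le; apply: ln_increasing.
by rewrite h; apply: Rle_refl.
Qed.

Lemma ln_le_sub1 x : 0 < x -> ln x <= x - 1.
Proof. move=> x0; have := exp_ineq1_le (ln x); rewrite exp_ln //; lra. Qed.

Lemma exp_sq y : 0 <= y -> y * y / 4 <= exp y.
Proof.
move=> y0; have e : exp y = exp (y/2) * exp (y/2) by rewrite -exp_plus; congr exp; lra.
have := exp_ineq1_le (y/2); rewrite e => h; nra.
Qed.

Lemma INR_fact_S k : INR (k.+1)`! = INR k.+1 * INR k`!.
Proof. by rewrite factS -mult_INR. Qed.

Lemma fact_pos k : 0 < INR k`!.
Proof. apply: lt_0_INR; apply/ltP; exact: fact_gt0. Qed.

Lemma ln_fact k : (1 <= k)%nat -> INR k * ln (INR k) - INR k <= ln (INR k`!).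
Proof.
elim: k => [//|k IH] _.
case: k IH => [_|k IH].
  rewrite /= ln_1; lra.
have IH' := IH isT.
rewrite INR_fact_S ln_mult; last exact: fact_pos; last by apply: lt_0_INR; apply/ltP.
set a := INR k.+1 in IH' *.
have a1 : 1 <= a by rewrite /a; apply: (le_INR 1); apply/leP.
have -> : INR k.+2 = a + 1 by rewrite /a -S_INR.
have h : ln (a + 1) - ln a <= 1 / a.
  have -> : ln (a + 1) - ln a = ln ((a + 1) / a).
    rewrite /Rdiv ln_mult; [|lra|apply: Rinv_0_lt_compat; lra].
    rewrite ln_Rinv; lra.
  have := ln_le_sub1 ((a + 1) / a) ltac:(apply: Rdiv_lt_0_compat; lra).
  have -> : (a + 1) / a - 1 = 1 / a by field; lra.
  done.
have h2 : a * (ln (a + 1) - ln a) <= 1.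
  have := Rmult_le_compat_l a _ _ ltac:(lra) h.
  have -> : a * (1 / a) = 1 by field; lra.
  done.
nra.
Qed.

Lemma ln2_facts : 1/2 < ln 2 /\ -1 <= ln (ln 2).
Proof.
have e1 : 2 <= exp 1 by have := exp_ineq1_le 1; lra.
have e3 := exp_le_3.
have eh : exp (1/2) * exp (1/2) = exp 1 by rewrite -exp_plus; congr exp; lra.
have eh0 : 0 < exp (1/2) by apply: exp_pos.
have lt2 : exp (1/2) < 2 by nra.
have l2 : 1/2 < ln 2.
  rewrite -[X in X < _](ln_exp (1/2)); apply: ln_increasing => //.
split=> //.
have em : exp (-1) * exp 1 = 1 by rewrite -exp_plus; rewrite (_ : -1 + 1 = 0) ?exp_0 //; lra.
have em0 : 0 < exp (-1) by apply: exp_pos.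
have : exp (-1) <= ln 2 by nra.
move=> h; rewrite -(ln_exp (-1)); apply: ln_le' => //.
Qed.

Lemma INR_Zto_nat k : (0 <= k)%Z -> INR (Z.to_nat k) = IZR k.
Proof. by move=> k0; rewrite INR_IZR_INZ Z2Nat.id. Qed.

Lemma INR_expn n : INR (expn 2 n) = 2 ^ n.
Proof. elim: n => [|n IH]; first by rewrite expn0.
by rewrite expnS mult_INR IH. Qed.

Lemma asym eps : 0 < eps -> exists n0 : nat, forall n : nat, (n0 <= n)%nat ->
  exists m' : nat, (expn 2 n * expn 2 n < m'.+1`! * m'.+1`!)%nat /\
  INR (n + (m'.+1 + m'.+1)) <= INR n + (2 + eps) * INR n / (ln (INR n) / ln 2).
Proof.
move=> eps0.
set d := eps / 2.
have d0 : 0 < d by rewrite /d; lra.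
set Y0 := 16 / d + 9.
have Y0d : d * Y0 = 16 + 9 * d by rewrite /Y0; field; lra.
case: (INR_unbounded (exp (exp Y0))) => n0 hn0.
exists n0 => n nn0.
set N := INR n.
have NN0 : INR n0 <= N by apply: le_INR; apply/leP.
have N0 : 0 < N by have := exp_pos (exp Y0); lra.
set L := ln N.
have LY : exp Y0 < L.
  rewrite -(ln_exp (exp Y0)); apply: ln_increasing; [apply: exp_pos|lra].
have L0 : 0 < L by have := exp_pos Y0; lra.
set y := ln L.
have yY : Y0 < y by rewrite -(ln_exp Y0); apply: ln_increasing; [apply: exp_pos|lra].
have Y09 : 9 <= Y0.
  have : 0 < 16 / d by apply: Rdiv_lt_0_compat; lra.
  rewrite /Y0; lra.
have eL : exp y = L by rewrite /y exp_ln.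
have eN : exp L = N by rewrite /L exp_ln.
have Ly : y * y / 4 <= L by rewrite -eL; apply: exp_sq; lra.
have NL : L * L / 4 <= N by rewrite -eN; apply: exp_sq; lra.
have [l2 ll2] := ln2_facts.
set l := ln 2 in l2 ll2 *.
have LY0 : 16 / d <= L.
  have eY : Y0 = 16 / d + 9 by [].
  have := exp_ineq1_le Y0; lra.
have dL : 16 <= d * L.
  have : d * (16 / d) = 16 by field; lra.
  nra.
set z := (1 + d / 2) * N * l / L.
set x := (1 + d) * N * l / L.
have Nl0 : 0 < N * l by apply: Rmult_lt_0_compat; lra.
have z0 : 0 < z.
  rewrite /z; apply: Rdiv_lt_0_compat => //; rewrite Rmult_assoc.
  apply: Rmult_lt_0_compat; lra.
have xz : z + 1 <= x.
  have -> : x = z + (d / 2) * N * l / L by rewrite /x /z; field; lra.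
  have : L <= (d / 2) * N * l by nra.
  move=> h; have : 1 <= (d / 2) * N * l / L.
    by apply: (Rmult_le_reg_r L) => //; rewrite /Rdiv Rmult_assoc Rinv_l; lra.
  lra.
have [up1 up2] := archimed z.
have upz0 : (0 <= up z)%Z by apply: le_0_IZR; lra.
set M := Z.to_nat (up z).
have eM : INR M = IZR (up z) by apply: INR_Zto_nat.
have Mz : z < INR M by lra.
have Mx : INR M <= x by lra.
have M0 : (0 < M)%nat.
  case E: M => //; rewrite E /= in Mz; lra.
exists M.-1; rewrite prednK //.
split; last first.
  rewrite !plus_INR.
  have -> : (2 + eps) * N / (L / l) = 2 * x by rewrite /x /d; field; lra.
  rewrite -/N; lra.
have key : (1 + d / 2) * (L - y - 2) > L.
  have h1 : d * y > 16 + 8 * d.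
    have : d * y > d * Y0 by apply: Rmult_lt_compat_l.
    lra.
  have h2 : d / 2 * (y * y / 4) > (1 + d / 2) * (y + 2) by nra.
  nra.
have lz : L - y - 1 <= ln z.
  have Ll0 : 0 < l by lra.
  rewrite /z /Rdiv !ln_mult ?ln_Rinv; try nra; try (apply: Rinv_0_lt_compat; lra).
  have : 0 <= ln (1 + d / 2).
    rewrite -ln_1; apply: ln_le'; lra.
  rewrite -/L -/y; lra.
have lzM : ln z <= ln (INR M) by apply: ln_le'; lra.
have lf := @ln_fact M M0.
have F : N * l < ln (INR M`!).
  have p : 0 < L - y - 2.
    apply: Rnot_le_lt => h.
    have : (1 + d / 2) * (L - y - 2) <= 0.
      have := Rmult_le_compat_l (1 + d / 2) _ _ ltac:(lra) h; lra.
    lra.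
  have h1 : z * (L - y - 2) <= INR M * (ln (INR M) - 1).
    apply: Rle_trans (_ : INR M * (L - y - 2) <= _).
      apply: Rmult_le_compat_r; lra.
    apply: Rmult_le_compat_l; lra.
  have h2 : z * (L - y - 2) > N * l.
    have -> : z * (L - y - 2) = ((1 + d / 2) * (L - y - 2)) * (N * l / L).
      by rewrite /z; field; lra.
    have q0 : 0 < N * l / L by apply: Rdiv_lt_0_compat.
    set q := N * l / L.
    have -> : N * l = L * q by rewrite /q; field; lra.
    apply: Rlt_gt; apply: Rmult_lt_compat_r => //.
  lra.
have F2 : INR (expn 2 n) < INR M`!.
  apply: ln_lt_inv; [rewrite INR_expn; apply: pow_lt; lra | exact: fact_pos|].
  rewrite INR_expn ln_pow; last lra.
  rewrite -/N -/l in F *; lra.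
have F3 : (expn 2 n < M`!)%nat by apply/ltP; apply: INR_lt.
by apply: ltn_mul.
Qed.

End RealPart.

Theorem corollary4 :
  forall eps : R, (0 < eps)%R ->
  exists n0 : nat, forall n : nat, n0 <= n ->
    exists rJ rSD : nat,
      is_ramsey_number Jle (@Qle n) rJ /\
      is_ramsey_number (@SDle 1 2) (@Qle n) rSD /\
      rJ <= rSD /\
      (INR rSD <= INR n + (2 + eps) * INR n / (ln (INR n) / ln 2))%R.
Proof.
move=> eps e0; case: (asym eps e0) => n0 H; exists n0 => n nn0.
case: (H n nn0) => m' [big bound].
have hSD := ramsey_SD big.
case: (ramsey_num_exists hSD) => rSD [hrSD leSD].
have hJ := ramsey_J' (proj1 hrSD).
case: (ramsey_num_exists hJ) => rJ [hrJ leJ].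
exists rJ, rSD; split=> //; split=> //; split=> //.
apply: Rle_trans bound; apply: le_INR; apply/leP.
exact: leSD.
Qed.
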